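(* Assume all jobs have the same processing time, i.e. $p_j=1$ for all $j\in[n]$. Run IPR with $\rho=2$, and for each iteration $i$ of the while loop let $b^{(i)}_{\min}$ be the minimum of $p(B)$ over all bags in the tentative assignment at the start of iteration $i$. Then at each iteration $i$ (such that iteration $i+1$ is executed), $b^{(i+1)}_{\min}\ge b^{(i)}_{\min}$.
   Context: Jobs $j\in[n]$ have processing times $p_j\ge0$; for a bag $B$, $p(B)=\sum_{j\in B}p_j$. There are $m$ machines with predicted speeds $\hat s_1\ge\dots\ge\hat s_m$; $opt(\mathbf p,\hat{\mathbf s})$ is the minimum makespan $\max_i(\text{load of } i)/\hat s_i$ of assigning jobs to machines with speeds $\hat{\mathbf s}$. Algorithm IPR. Input: $\hat{\mathbf s}$, $\mathbf p$, $\alpha\in(0,1)$, accuracy $\epsilon\in(0,1)$, $\rho\ge1$. (1) Compute a partition $B_1,\dots,B_m$ with $p(B_1)\ge\dots\ge p(B_m)$ such that putting $B_i$ on machine $i$ has makespan at most $(1+\epsilon)opt(\mathbf p,\hat{\mathbf s})$ under speeds $\hat{\mathbf s}$. (2) Set $\overline{OPT}_C=\max_i p(B_i)/\hat s_i$ and tentative assignment $\mathcal M_i=\{B_i\}$. (3) While $\max\{p(B): B\in\cup_i\mathcal M_i, |B|\ge2\}>\rho\min\{p(B):B\in\cup_i\mathcal M_i\}$ (each execution of the loop body is an iteration): compute $\mathcal M'=$ LPT-Rebalance$(\mathcal M)$; if $\max_i\sum_{B\in\mathcal M'_i}p(B)/\hat s_i>(1+\alpha)\overline{OPT}_C$ return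 the current bags $\cup_i\mathcal M_i$; else $\mathcal M\leftarrow\mathcal M'$. (4) Return the bags $\cup_i\mathcal M_i$. LPT-Rebalance: let $B_{\min}$ be a bag of minimum $p(B)$ over all bags, $\mathcal M_{\min}$ its collection, $\mathcal M_{\max}$ a collection containing a bag of maximum $p(B)$ among bags with at least two jobs. Move $B_{\min}$ into $\mathcal M_{\max}$, let $\ell=|\mathcal M_{\max}|$, pool its jobs and redistribute them into $\ell$ new bags by LPT (jobs in non-increasing processing time, each into a currently least-loaded bag); these form the new $\mathcal M_{\max}$. *)

(* Defs.v *)
From HB Require Import structures.
From mathcomp Require Import all_boot all_order all_algebra.
Set Implicit Arguments. Unset Strict Implicit. Unset Printing Implicit Defensive.
Import Order.TTheory GRing.Theory Num.Theory.
Local Open Scope ring_scope.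

Section IPR.
Variables (R : realFieldType) (n m : nat).
Variable p : 'I_n -> R.
Variable s : 'I_m -> R.

Definition pB (B : {set 'I_n}) : R := \sum_(j in B) p j.

Definition assign_makespan (f : {ffun 'I_n -> 'I_m}) : R :=
  \big[Num.max/0]_(i : 'I_m) ((\sum_(j | f j == i) p j) / s i).

(* a tentative assignment: machine i holds a collection (list) of bags *)
Definition state := 'I_m -> seq {set 'I_n}.

Definition bags (M : state) : seq {set 'I_n} :=
  flatten [seq M i | i <- enum 'I_m].

Definition load (M : state) (i : 'I_m) : R := \sum_(B <- M i) pB B.

Definition state_makespan (M : state) : R :=
  \big[Num.max/0]_(i : 'I_m) (load M i / s i).

(* min { p(B) : B a bag of M } (0 if there is no bag) *)
Definition bmin (M : state) : R :=
  \big[Num.min/ pB (head set0 (bags M))]_(B <- bags M) pB B.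

(* while-loop condition:
   max{p(B) : B bag, |B| >= 2} > rho * min{p(B) : B bag} *)
Definition loop_cond (rho : R) (M : state) : Prop :=
  exists2 B, B \in bags M /\ (2 <= #|B|)%N &
  exists2 B', B' \in bags M & pB B > rho * pB B'.

(* LPT: jobs js (already in non-increasing order) are placed one by one into
   a currently least-loaded bag of bs; the final bags are out. *)
Inductive lpt_run : seq 'I_n -> seq {set 'I_n} -> seq {set 'I_n} -> Prop :=
| lpt_nil bs : lpt_run [::] bs bs
| lpt_cons j js bs k out :
    (k < size bs)%N ->
    (forall k', (k' < size bs)%N -> pB (nth set0 bs k) <= pB (nth set0 bs k')) ->
    lpt_run js (set_nth set0 bs k (j |: nth set0 bs k)) out ->
    lpt_run (j :: js) bs out.

(* out is a possible result of redistributing the jobs of pool into l bags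
   by LPT (ties broken arbitrarily) *)
Definition lpt (pool : {set 'I_n}) (l : nat) (out : seq {set 'I_n}) : Prop :=
  exists js, [/\ perm_eq js (enum pool),
                 sorted (fun a b => p b <= p a) js &
                 lpt_run js (nseq l set0) out].

Definition lpt_rebalance (M M' : state) : Prop :=
  exists (imin : 'I_m) (k : nat) (imax : 'I_m),
    let Bmin := nth set0 (M imin) k in
    [/\ (k < size (M imin))%N,
        (forall B, B \in bags M -> pB Bmin <= pB B),
        (exists2 B, B \in M imax /\ (2 <= #|B|)%N &
           forall B', B' \in bags M -> (2 <= #|B'|)%N -> pB B' <= pB B) &
        let M1 : state := fun i =>
          if i == imin then take k (M imin) ++ drop k.+1 (M imin) else M i in
        let Mmax := Bmin :: M1 imax in
        let pool := \bigcup_(B <- Mmax) B in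
        exists2 out, lpt pool (size Mmax) out &
          M' = fun i => if i == imax then out else M1 i].

(* A run of IPR for iterations 0..i: st k is the tentative assignment at the
   start of iteration k; each of the iterations 0..i was executed
   (loop condition held), and it did not return, i.e. the rebalanced
   assignment st k.+1 passed the (1+alpha) OPT_C test. *)
Definition ipr_no_return (alpha rho OPTC : R) (st : nat -> state) (i : nat) : Prop :=
  forall k, (k <= i)%N ->
    [/\ loop_cond rho (st k), lpt_rebalance (st k) (st k.+1) &
        state_makespan (st k.+1) <= (1 + alpha) * OPTC].

End IPR.

(* Main.v *)
Require Import Defs.
From HB Require Import structures.
From mathcomp Require Import all_boot all_order all_algebra zify.
Import Order.TTheory GRing.Theory Num.Theory.
Local Open Scope ring_scope.


Lemma sum_set_nth (T : Type) (x0 : T) (s : seq T) k y (F : T -> nat) :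
  (k < size s)%N ->
  (\sum_(x <- set_nth x0 s k y) F x + F (nth x0 s k) = \sum_(x <- s) F x + F y)%N.
Proof.
move=> hk; rewrite set_nthE hk.
have e : s = take k s ++ nth x0 s k :: drop k.+1 s by rewrite -drop_nth // cat_take_drop.
rewrite [in X in (_ = X + _)%N]e !big_cat !big_cons /=.
lia.
Qed.

Lemma count_set_nth (T : Type) (x0 : T) (s : seq T) k y (a : pred T) :
  (k < size s)%N ->
  (count a (set_nth x0 s k y) + a (nth x0 s k) = count a s + a y)%N.
Proof.
move=> hk; rewrite set_nthE hk.
have e : s = take k s ++ nth x0 s k :: drop k.+1 s by rewrite -drop_nth // cat_take_drop.
rewrite [in X in (_ = X + _)%N]e !count_cat /=.
lia.
Qed.

Lemma mem_set_nth' (T : eqType) (x0 : T) (s : seq T) k y x :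
  (k < size s)%N -> x \in set_nth x0 s k y -> x = y \/ x \in s.
Proof.
move=> hk; rewrite set_nthE hk mem_cat in_cons.
case/or3P => [h|/eqP->|h]; [right; exact: mem_take h| by left| right; exact: mem_drop h].
Qed.

Lemma pB_card (R : realFieldType) n (p : 'I_n -> R) :
  (forall j, p j = 1) -> forall X, pB p X = (#|X|)%:R.
Proof. by move=> hp X; rewrite /pB (eq_bigr (fun _ => 1)) ?sumr_const. Qed.

Lemma lpt_count (R : realFieldType) n (p : 'I_n -> R) js bs out :
  lpt_run p js bs out -> forall j,
  (count (fun X : {set 'I_n} => j \in X) out <=
   count (fun X : {set 'I_n} => j \in X) bs + count (pred1 j) js)%N.
Proof.
elim => [bs0 | j0 js0 bs0 k out0 hk _ _ IH] j /=; first by rewrite addn0.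
have := IH j.
have := count_set_nth _ set0 bs0 k (j0 |: nth set0 bs0 k) (fun X : {set 'I_n} => j \in X) hk.
rewrite /= in_setU1 eq_sym.
case: (j0 == j); case: (j \in nth set0 bs0 k) => /=; lia.
Qed.

Lemma sum_le_const (T : eqType) (s : seq T) (F : T -> nat) b :
  (forall x, x \in s -> F x <= b)%N -> (\sum_(x <- s) F x <= size s * b)%N.
Proof.
elim: s => [|x s IH] h; first by rewrite big_nil.
rewrite big_cons /= mulSn leq_add ?h ?mem_head // IH // => y hy.
by apply: h; rewrite in_cons hy orbT.
Qed.

Lemma lpt_min (R : realFieldType) n (p : 'I_n -> R) :
  (forall j, p j = 1) -> forall js bs out,
  lpt_run p js bs out -> uniq js ->
  (forall j X, j \in js -> X \in bs -> j \notin X) ->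
  (forall X Y, X \in bs -> Y \in bs -> #|X| <= #|Y|.+1)%N ->
  forall b, (size bs * b <= \sum_(X <- bs) #|X| + size js)%N ->
  forall X, X \in out -> (b <= #|X|)%N.
Proof.
move=> hp js bs out; elim => [bs0 | j0 js0 bs0 k out0 hk hmin _ IH] /=.
  move=> _ _ hY b; rewrite addn0 => hs X hX.
  rewrite leqNgt; apply/negP => hlt.
  have hrem : (\sum_(Y <- rem X bs0) #|Y| <= size (rem X bs0) * b)%N.
    apply: sum_le_const => Y hYr.
    by move: (hY Y X (mem_rem hYr) hX) => h; apply: leq_trans h hlt.
  have e : (\sum_(Y <- bs0) #|Y| = #|X| + \sum_(Y <- rem X bs0) #|Y|)%N by rewrite (perm_big _ (perm_to_rem hX)) big_cons.
  move: hs hrem; rewrite e size_rem //.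
  have : (0 < size bs0)%N by case: (bs0) hX.
  move: hlt; case: (size bs0) => [|l] //= hl _; rewrite mulSn; lia.
move=> /andP [hj0 hu] hnot hY b hs.
set Z := nth set0 bs0 k.
have hZ : Z \in bs0 by apply: mem_nth.
have hjZ : j0 \notin Z by apply: hnot => //; apply: mem_head.
have hcard : #|j0 |: Z| = #|Z|.+1 by rewrite cardsU1 hjZ.
have hZmin : forall Y, Y \in bs0 -> (#|Z| <= #|Y|)%N.
  move=> Y hYb; have [k' hk' ->] : exists2 k', (k' < size bs0)%N & Y = nth set0 bs0 k'.
    by exists (index Y bs0); rewrite ?index_mem ?nth_index.
  by have := hmin k' hk'; rewrite !(pB_card _ _ p hp) ler_nat.
apply: IH => //.
- move=> j X hj /(mem_set_nth' _ _ _ _ _ _ hk) [->|hX].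
    rewrite in_setU1 negb_or hnot ?andbT //; last by rewrite in_cons hj orbT.
    by apply/eqP => e; move: hj0; rewrite -e hj.
  by apply: hnot => //; rewrite in_cons hj orbT.
- move=> X Y /(mem_set_nth' _ _ _ _ _ _ hk) [->|hX] /(mem_set_nth' _ _ _ _ _ _ hk) [->|hYb].
  + by rewrite leqnSn.
  + by rewrite hcard ltnS hZmin.
  + by rewrite hcard; apply: leq_trans (hY X Z hX hZ) (leqnSn _).
  + exact: hY.
- have := sum_set_nth _ set0 bs0 k (j0 |: Z) (fun X : {set 'I_n} => #|X|) hk.
  rewrite size_set_nth /= -/Z hcard.
  have -> : maxn k.+1 (size bs0) = size bs0 by apply/maxn_idPr.
  move: hs => /=; lia.
Qed.

Definition cnt n m (M : state n m) (j : 'I_n) : nat :=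
  (\sum_(i < m) count (fun X : {set 'I_n} => j \in X) (M i))%N.

Arguments cnt {n m}.
Definition Inv n m (M : state n m) := forall j, (cnt M j <= 1)%N.
Arguments Inv {n m}.

Lemma bagsP n m (M : state n m) X : reflect (exists i, X \in M i) (X \in bags M).
Proof.
apply: (iffP flatten_mapP) => [[i _ h]|[i h]]; first by exists i.
by exists i; rewrite ?mem_enum.
Qed.

Lemma mem_bigcup_count n (L : seq {set 'I_n}) j :
  j \in \bigcup_(X <- L) X -> (0 < count (fun X : {set 'I_n} => j \in X) L)%N.
Proof.
elim: L => [|X L IH]; first by rewrite big_nil in_set0.
rewrite big_cons in_setU /= => /orP [->//|/IH h]; apply: leq_trans h (leq_addl _ _).
Qed.

Lemma disj_sum n (L : seq {set 'I_n}) :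
  (forall j, count (fun X : {set 'I_n} => j \in X) L <= 1)%N ->
  (\sum_(X <- L) #|X| <= #|\bigcup_(X <- L) X|)%N.
Proof.
elim: L => [|X L IH] h; first by rewrite big_nil.
rewrite !big_cons cardsU.
have -> : X :&: \bigcup_(Y <- L) Y = set0.
  apply/setP => j; rewrite in_setI in_set0.
  apply/negP => /andP [hX /mem_bigcup_count hL].
  by move: (h j); rewrite /= hX add1n ltnS leqNgt hL.
rewrite cards0 subn0 leq_add2l IH // => j.
by have := h j; rewrite /=; lia.
Qed.

Lemma sum_ge_const (T : eqType) (s : seq T) (F : T -> nat) b :
  (forall x, x \in s -> b <= F x)%N -> (size s * b <= \sum_(x <- s) F x)%N.
Proof.
elim: s => [|x s IH] h; first by rewrite big_nil.
rewrite big_cons /= mulSn leq_add ?h ?mem_head // IH // => y hy.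
by apply: h; rewrite in_cons hy orbT.
Qed.

Lemma bigmin_le (R : realFieldType) (T : eqType) (s : seq T) (F : T -> R) x0 x :
  x \in s -> \big[Num.min/x0]_(y <- s) F y <= F x.
Proof.
elim: s => [|y s IH] //; rewrite in_cons big_cons => /orP [/eqP ->|h].
  by rewrite ge_min lexx.
by rewrite ge_min IH ?orbT.
Qed.

Lemma le_bigmin (R : realFieldType) (T : eqType) (s : seq T) (F : T -> R) x0 c :
  c <= x0 -> (forall x, x \in s -> c <= F x) -> c <= \big[Num.min/x0]_(y <- s) F y.
Proof.
move=> h0; elim: s => [|y s IH] h; first by rewrite big_nil.
rewrite big_cons le_min h ?mem_head // IH // => x hx.
by apply: h; rewrite in_cons hx orbT.
Qed.

Lemma bmin_le (R : realFieldType) n m (p : 'I_n -> R) (M : state n m) X :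
  X \in bags M -> bmin p M <= pB p X.
Proof. exact: bigmin_le. Qed.

Lemma le_bmin (R : realFieldType) n m (p : 'I_n -> R) (M : state n m) X0 c :
  X0 \in bags M -> (forall X, X \in bags M -> c <= pB p X) -> c <= bmin p M.
Proof.
rewrite /bmin; case: (bags M) => [//|Y s] _ h.
apply: le_bigmin => //; apply: h; exact: mem_head.
Qed.

Lemma step (R : realFieldType) n m (p : 'I_n -> R) (M M' : state n m) :
  (forall j, p j = 1) ->
  lpt_rebalance p M M' -> Inv M ->
  Inv M' /\ (forall X, X \in bags M' -> bmin p M <= pB p X).
Proof.
move=> hp [imin [k [imax [hk hBmin _ [out hlpt eM']]]]] hinv.
set Bmin := nth set0 (M imin) k in hBmin hlpt eM'.
set M1 := (fun i => if i == imin then take k (M imin) ++ drop k.+1 (M imin) else M i) in hlpt eM'.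
set Mmax := Bmin :: M1 imax in hlpt.
set pool := \bigcup_(B <- Mmax) B in hlpt.
have hM1sub : forall i X, X \in M1 i -> X \in M i.
  move=> i X; rewrite /M1; case: ifP => [/eqP ->|//].
  by rewrite mem_cat => /orP [/mem_take|/mem_drop].
have hBminin : Bmin \in M imin by apply: mem_nth.
have heimin : M imin = take k (M imin) ++ Bmin :: drop k.+1 (M imin).
  by rewrite -drop_nth // cat_take_drop.
have hcM : forall a : pred {set 'I_n},
    (\sum_(i < m) count a (M i) = a Bmin + count a (M1 imax) + \sum_(i < m | i != imax) count a (M1 i))%N.
  move=> a; rewrite -addnA.
  have -> : (count a (M1 imax) + \sum_(i < m | i != imax) count a (M1 i) = \sum_(i < m) count a (M1 i))%N.
    by rewrite [in RHS](bigD1 imax).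
  rewrite (bigD1 imin) // [in RHS](bigD1 imin) //=.
  rewrite {1}heimin count_cat /= /M1 eqxx count_cat.
  have -> : (\sum_(i < m | i != imin) count a (M i) =
             \sum_(i < m | i != imin) count a (if i == imin then take k (M imin) ++ drop k.+1 (M imin) else M i))%N.
    by apply: eq_bigr => i /negbTE ->.
  by rewrite [X in (X + _)%N = _]addnCA -addnA.
have hcM' : forall a : pred {set 'I_n},
    (\sum_(i < m) count a (M' i) = count a out + \sum_(i < m | i != imax) count a (M1 i))%N.
  move=> a; rewrite eM' (bigD1 imax) //= eqxx; congr (_ + _)%N.
  by apply: eq_bigr => i /negbTE ->.
have hMmax : forall j, (count (fun X : {set 'I_n} => j \in X) Mmax <= 1)%N.
  move=> j; have := hinv j; rewrite /cnt hcM /=; lia.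
have hbagsM : forall i X, X \in M i -> X \in bags M.
  by move=> i X h; apply/bagsP; exists i.
have hBminle : forall Y, Y \in Mmax -> (#|Bmin| <= #|Y|)%N.
  move=> Y; rewrite in_cons => /orP [/eqP ->//|/hM1sub /hbagsM /hBmin].
  by rewrite !(pB_card _ _ p hp) ler_nat.
case: hlpt => js [hperm _ hrun].
split.
  move=> j; have := hinv j; rewrite /cnt hcM hcM' /=.
  have := lpt_count _ _ _ _ _ _ hrun j.
  rewrite count_nseq in_set0 mul0n add0n.
  have := count_uniq_mem j (enum_uniq (mem pool)).
  rewrite (permP hperm) mem_enum => ->.
  case hj: (j \in pool); last by rewrite leqn0 => /eqP ->; lia.
  have := mem_bigcup_count _ _ _ hj; rewrite -/Mmax /=; set S := (\sum_(i < m | i != imax) _)%N; set c := count _ (M1 imax); set o := count _ out; case: (j \in Bmin) => /=; lia.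
move=> X /bagsP [i0]; rewrite eM'; case: ifP => [_ hX|_ /hM1sub /hbagsM]; last by apply: bmin_le.
apply: le_trans (bmin_le _ _ _ p _ _ (hbagsM _ _ hBminin)) _.
rewrite !(pB_card _ _ p hp) ler_nat.
apply: (lpt_min _ _ _ hp _ _ _ hrun) => //.
- by rewrite (perm_uniq hperm) enum_uniq.
- by move=> j Y _; rewrite mem_nseq => /andP [_ /eqP ->]; rewrite in_set0.
- by move=> Y Z; rewrite !mem_nseq => /andP [_ /eqP ->] /andP [_ /eqP ->]; rewrite cards0.
- rewrite size_nseq (perm_size hperm) -cardE.
  apply: leq_trans (leq_addl _ _).
  apply: leq_trans (disj_sum _ _ hMmax).
  exact: sum_ge_const.
Qed.

Theorem lemma10 (R : realFieldType) (n m : nat)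
  (p : 'I_n -> R) (s : 'I_m -> R) (alpha eps : R)
  (B : 'I_m -> {set 'I_n}) (st : nat -> state n m) (i : nat) :
  (* unit processing times *)
  (forall j, p j = 1) ->
  (* predicted speeds: positive, non-increasing *)
  (forall k, 0 < s k) ->
  (forall k k' : 'I_m, (k <= k')%N -> s k' <= s k) ->
  0 < alpha < 1 -> 0 < eps < 1 ->
  (* step (1): B is a partition with p(B_1) >= ... >= p(B_m) and
     makespan at most (1+eps) opt(p, s) *)
  (forall j, exists k, j \in B k) ->
  (forall k k', k != k' -> [disjoint B k & B k']) ->
  (forall k k' : 'I_m, (k <= k')%N -> pB p (B k') <= pB p (B k)) ->
  (forall f : {ffun 'I_n -> 'I_m},
     \big[Num.max/0]_(k : 'I_m) (pB p (B k) / s k)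
       <= (1 + eps) * assign_makespan p s f) ->
  (* step (2): initial tentative assignment *)
  st 0%N = (fun k => [:: B k]) ->
  (* iterations 0..i executed without returning (rho = 2) ... *)
  ipr_no_return p s alpha 2
    (\big[Num.max/0]_(k : 'I_m) (pB p (B k) / s k)) st i ->
  (* ... and iteration i+1 is executed *)
  loop_cond p 2 (st i.+1) ->
  bmin p (st i) <= bmin p (st i.+1).
Proof.
move=> hp _ _ _ _ hcov hdisj _ _ hst0 hno hloop.
have hinv0 : Inv (st 0%N).
  move=> j; rewrite /cnt hst0 /=.
  have [k0 hk0] := hcov j.
  rewrite (bigD1 k0) //= big1 ?hk0 // => i0 hi.
  by rewrite (disjointFr (hdisj k0 i0 _) hk0) // eq_sym.
have hinv : forall k, (k <= i)%N -> Inv (st k).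
  elim => [//|k IH] hk.
  have [_ hreb _] := hno k (ltnW hk).
  exact: (step _ _ _ _ _ _ hp hreb (IH (ltnW hk))).1.
have [_ hreb _] := hno i (leqnn i).
have [_ hle] := step _ _ _ _ _ _ hp hreb (hinv i (leqnn i)).
case: hloop => X [hX _] _.
exact: (le_bmin _ _ _ p _ X).
Qed.
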